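(* Let $A$ be an $\mathfrak h$-trivial formal deformation of the $\mathfrak a$-algebra $U(\mathfrak{sl}_2)$. Then $A$ is $\mathfrak b$-trivial: there exists a $\mathbb k[[h]]$-algebra isomorphism $g:U(\mathfrak{sl}_2)[[h]]\to A$ such that $g(H)=H$, $g(X^-)=X^-$, and $\bar g:U(\mathfrak{sl}_2)\to A/hA$ is an isomorphism of $\mathfrak a$-algebras. Moreover, such a $g$ is unique.
   Context: $\mathbb k$ is a field of characteristic zero, and $\mathbb k[[h]]$ is the ring of formal power series over $\mathbb k$. For a $\mathbb k$-vector space $V_0$, $V_0[[h]]$ denotes the module of formal series $\sum_{m\ge0}v_mh^m$ with $v_m\in V_0$. A $\mathbb k[[h]]$-module is topologically free if it is isomorphic to some $V_0[[h]]$. For a $\mathbb k[[h]]$-linear map $g$, $\bar g$ denotes the induced map modulo $h$. $\mathfrak a$ is the Lie algebra over $\mathbb k$ generated by $H,X^-,X^+$ subject to $[H,X^\pm]=\pm2X^\pm$. An $\mathfrak a$-algebra is an algebra with a structural homomorphism from $U(\mathfrak a)$; homomorphisms of such algebras commute with structural maps. $U(\mathfrak{sl}_2)$ is an $\mathfrak a$-algebra via the canonical projection (Chevalley generators $H,X^\pm$). We set $U_h(\mathfrak a):=U(\mathfrak a)[[h]]$. A formal deformation of the $\mathfrak a$-algebra $U(\mathfrak{sl}_2)$ is a $U_h(\mathfrak a)$-algebra $A$ that is topologically free as a $\mathbb k[[h]]$-module, with $A/hA\cong U(\mathfrak{sl}_2)$ as $\mathfrak a$-algebras (here $A/hA$ is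 an $\mathfrak a$-algebra via $U_h(\mathfrak a)/h\cong U(\mathfrak a)$). The images of $H,X^\pm$ in $A$ are again denoted $H,X^\pm$. Such an $A$ is $\mathfrak h$-trivial if there is a $\mathbb k[[h]]$-algebra isomorphism $g:U(\mathfrak{sl}_2)[[h]]\to A$ with $g(H)=H$ and $\bar g$ an isomorphism of $\mathfrak a$-algebras. *)

(* Defs.v *)
From HB Require Import structures.
From mathcomp Require Import all_boot all_order all_algebra.
Set Implicit Arguments. Unset Strict Implicit. Unset Printing Implicit Defensive.
Import GRing.Theory.
Local Open Scope ring_scope.

(* An element  sum_m v_m h^m  of V0[[h]] is the sequence  v : nat -> V0. *)

Section Series.
Variable k : fieldType.

Definition ps_cst (c : k) : nat -> k := fun n => if n is 0%N then c else 0.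
Definition ps_one : nat -> k := ps_cst 1.
Definition ps_h : nat -> k := fun n => (n == 1%N)%:R.
Definition ps_add (s t : nat -> k) : nat -> k := fun n => s n + t n.
Definition ps_mul (s t : nat -> k) : nat -> k :=
  fun n => \sum_(i < n.+1) s i * t (n - i)%N.

Definition ser_cst (V : zmodType) (v : V) : nat -> V :=
  fun n => if n is 0%N then v else 0.
Definition ser_add (V : zmodType) (v w : nat -> V) : nat -> V :=
  fun n => v n + w n.
Definition ser_act (V : lmodType k) (s : nat -> k) (v : nat -> V) : nat -> V :=
  fun n => \sum_(i < n.+1) s i *: v (n - i)%N.
Definition ser_mul (R : nzRingType) (f g : nat -> R) : nat -> R :=
  fun n => \sum_(i < n.+1) f i * g (n - i)%N.

Definition kh_algebra (A : nzRingType) (act : (nat -> k) -> A -> A) : Prop :=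
  [/\ forall s, {morph act s : a b / a + b},
      forall s t a, act (ps_add s t) a = act s a + act t a,
      forall s t a, act (ps_mul s t) a = act s (act t a),
      forall a, act ps_one a = a &
      forall s a b, act s (a * b) = act s a * b /\ act s (a * b) = a * act s b].

Definition top_free (A : nzRingType) (act : (nat -> k) -> A -> A) : Prop :=
  exists (V0 : lmodType k) (phi : A -> nat -> V0),
    [/\ bijective phi,
        {morph phi : a b / a + b >-> ser_add a b} &
        forall s a, phi (act s a) = ser_act s (phi a)].

Definition in_hA (A : nzRingType) (act : (nat -> k) -> A -> A) (a : A) : Prop :=
  exists b, a = act ps_h b.

(* defining relations of the Lie algebra a (images of H, X^-, X^+) *)
Definition a_rel (R : nzRingType) (H Xm Xp : R) : Prop :=
  H * Xp - Xp * H = Xp *+ 2 /\ H * Xm - Xm * H = - (Xm *+ 2).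

Definition sl2_rel (R : nzRingType) (H Xm Xp : R) : Prop :=
  [/\ H * Xp - Xp * H = Xp *+ 2, H * Xm - Xm * H = - (Xm *+ 2)
    & Xp * Xm - Xm * Xp = H].

Definition alg_hom (U B : algType k) (f : U -> B) : Prop :=
  [/\ {morph f : x y / x + y}, {morph f : x y / x * y}, f 1 = 1
    & forall (c : k) x, f (c *: x) = c *: f x].

(* (U, H, X^-, X^+) is the universal enveloping algebra U(sl2): the
   initial k-algebra with three elements satisfying the sl2 relations *)
Definition is_Usl2 (U : algType k) (H Xm Xp : U) : Prop :=
  sl2_rel H Xm Xp /\
  forall (B : algType k) (bH bm bp : B), sl2_rel bH bm bp ->
    exists f : U -> B,
      [/\ alg_hom f, f H = bH, f Xm = bm, f Xp = bp &
          forall f' : U -> B, alg_hom f' -> f' H = bH -> f' Xm = bm ->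
            f' Xp = bp -> f' =1 f].

Definition formal_deformation (U : algType k) (HU XmU XpU : U)
    (A : nzRingType) (act : (nat -> k) -> A -> A) (HA XmA XpA : A) : Prop :=
  [/\ kh_algebra act, top_free act, a_rel HA XmA XpA &
      (* A/hA = U as a-algebras, via the projection pi with kernel hA *)
      exists pi : A -> U,
        [/\ [/\ {morph pi : x y / x + y}, {morph pi : x y / x * y}, pi 1 = 1
              & forall c a, pi (act (ps_cst c) a) = c *: pi a],
            forall u, exists a, pi a = u,
            forall a, pi a = 0 <-> in_hA act a
          & [/\ pi HA = HU, pi XmA = XmU & pi XpA = XpU]]].

Definition kh_alg_iso (U : algType k) (A : nzRingType)
    (act : (nat -> k) -> A -> A) (g : (nat -> U) -> A) : Prop :=
  [/\ bijective g,
      {morph g : f f' / ser_add f f' >-> f + f'},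
      {morph g : f f' / ser_mul f f' >-> f * f'},
      g (ser_cst 1) = 1 &
      forall s f, g (ser_act s f) = act s (g f)].

(* gbar : U(sl2) -> A/hA, u |-> class of g(u), is an isomorphism of
   a-algebras (bijective, and sending H, X^-, X^+ to the classes of the
   structural elements; multiplicativity is inherited from g) *)
Definition bar_a_iso (U : algType k) (HU XmU XpU : U) (A : nzRingType)
    (act : (nat -> k) -> A -> A) (HA XmA XpA : A) (g : (nat -> U) -> A) : Prop :=
  [/\ forall u v, in_hA act (g (ser_cst u) - g (ser_cst v)) -> u = v,
      forall a, exists u, in_hA act (a - g (ser_cst u)),
      in_hA act (g (ser_cst HU) - HA),
      in_hA act (g (ser_cst XmU) - XmA) &
      in_hA act (g (ser_cst XpU) - XpA)].

Definition h_trivializing (U : algType k) (HU XmU XpU : U) (A : nzRingType)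
    (act : (nat -> k) -> A -> A) (HA XmA XpA : A) (g : (nat -> U) -> A) : Prop :=
  [/\ kh_alg_iso act g, g (ser_cst HU) = HA
    & bar_a_iso HU XmU XpU act HA XmA XpA g].

Definition b_trivializing (U : algType k) (HU XmU XpU : U) (A : nzRingType)
    (act : (nat -> k) -> A -> A) (HA XmA XpA : A) (g : (nat -> U) -> A) : Prop :=
  [/\ kh_alg_iso act g, g (ser_cst HU) = HA, g (ser_cst XmU) = XmA
    & bar_a_iso HU XmU XpU act HA XmA XpA g].

End Series.

(* Main.v *)
From HB Require Import structures.
From mathcomp Require Import all_boot all_order all_algebra.
From Stdlib Require Import ClassicalEpsilon FunctionalExtensionality.
Require Import Defs.
Set Implicit Arguments. Unset Strict Implicit. Unset Printing Implicit Defensive.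
Import GRing.Theory.
Local Open Scope ring_scope.

From mathcomp Require Import zify.

Definition closedP (k : fieldType) (U : algType k) (P : U -> Prop) : Prop :=
  [/\ P 1, forall x y, P x -> P y -> P (x + y), forall x y, P x -> P y -> P (x * y)
    & forall (c : k) x, P x -> P (c *: x)].

Definition Pb (k : fieldType) (U : algType k) (P : U -> Prop) (u : U) : bool :=
  if excluded_middle_informative (closedP P -> P u) then true else false.

Lemma PbP (k : fieldType) (U : algType k) (P : U -> Prop) u : reflect (closedP P -> P u) (Pb P u).
Proof. rewrite /Pb; case: excluded_middle_informative => h; by constructor. Qed.

Lemma Pb_closed (k : fieldType) (U : algType k) (P : U -> Prop) : subalg_closed (Pb P).
Proof.
split.
- by rewrite unfold_in; apply/PbP => -[].
- move=> c x y; rewrite !unfold_in => /PbP hx /PbP hy; apply/PbP => cl.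
  case: cl (cl) => _ hA _ hZ cl; apply: hA; [apply: hZ; exact: hx | exact: hy].
- move=> x y; rewrite !unfold_in => /PbP hx /PbP hy; apply/PbP => cl.
  case: cl (cl) => _ _ hM _ cl; apply: hM; [exact: hx | exact: hy].
Qed.

HB.instance Definition _ (k : fieldType) (U : algType k) (P : U -> Prop) :=
  GRing.isSubalgClosed.Build k U (Pb P) (GRing.subalg_closed_semi (Pb_closed P)).

Definition Tsub (k : fieldType) (U : algType k) (P : U -> Prop) := {u : U | Pb P u}.
HB.instance Definition _ (k : fieldType) (U : algType k) (P : U -> Prop) := [isSub for (@sval U (Pb P)) : Tsub P -> U].
HB.instance Definition _ (k : fieldType) (U : algType k) (P : U -> Prop) := [Choice of Tsub P by <:].
HB.instance Definition _ (k : fieldType) (U : algType k) (P : U -> Prop) := [SubChoice_isSubAlgebra of Tsub P by <:].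


Lemma alg_hom_id (k : fieldType) (U : algType k) : alg_hom (@id U).
Proof. by split. Qed.

Lemma gen_all (k : fieldType) (U : algType k) (H F E : U) (hU : is_Usl2 H F E)
  (P : U -> Prop) : closedP P -> P H -> P F -> P E -> forall u, P u.
Proof.
move=> cl pH pF pE u.
have mk : forall x, P x -> Pb P x by move=> x px; apply/PbP.
pose tH : Tsub P := exist _ H (mk _ pH).
pose tF : Tsub P := exist _ F (mk _ pF).
pose tE : Tsub P := exist _ E (mk _ pE).
case: hU => [[r1 r2 r3] univ].
have rel : sl2_rel tH tF tE.
  by split; apply: val_inj; [exact: r1 | exact: r2 | exact: r3].
have [f [[fa fm f1 fz] fH fF fE uniq]] := univ _ _ _ _ rel.
have [f0 [_ _ _ _ u0]] := univ _ _ _ _ (And3 r1 r2 r3).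
have hv : alg_hom (fun x => val (f x)).
  split.
  - by move=> x y; rewrite fa rmorphD.
  - by move=> x y; rewrite fm rmorphM.
  - by rewrite f1 rmorph1.
  - by move=> c x; rewrite fz.
have e1 := u0 _ hv; rewrite fH fF fE in e1.
have e2 := u0 _ (alg_hom_id U).
have hu : val (f u) = u by rewrite (e1 erefl erefl erefl u) -(e2 erefl erefl erefl u).
rewrite -hu; have := valP (f u); move/PbP; apply; exact: cl.
Qed.
Definition br (R : nzRingType) (a b : R) := a * b - b * a.

Lemma br_mulr (R : nzRingType) (a x y : R) : br a (x * y) = br a x * y + x * br a y.
Proof. by rewrite /br mulrBl mulrBr !mulrA subrKA. Qed.

Lemma brD (R : nzRingType) (a x y : R) : br a (x + y) = br a x + br a y.
Proof. by rewrite /br mulrDr mulrDl opprD addrACA. Qed.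

Lemma brN (R : nzRingType) (a x : R) : br a (- x) = - br a x.
Proof. by rewrite /br mulrN mulNr opprK opprB addrC. Qed.

Lemma br0 (R : nzRingType) (a : R) : br a 0 = 0.
Proof. by rewrite /br mulr0 mul0r subrr. Qed.

Lemma brMn (R : nzRingType) (a x : R) n : br a (x *+ n) = br a x *+ n.
Proof. by elim: n => [|n IH]; rewrite ?br0 // !mulrSr brD IH. Qed.

Lemma brZ (k : fieldType) (R : algType k) (a x : R) (c : k) : br a (c *: x) = c *: br a x.
Proof. by rewrite /br scalerBr scalerAr scalerAl. Qed.

Lemma brB (R : nzRingType) (a x y : R) : br a (x - y) = br a x - br a y.
Proof. by rewrite brD brN. Qed.

Lemma jacobi (R : nzRingType) (a b x : R) :
  br a (br b x) = br b (br a x) + br (br a b) x.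
Proof.
rewrite [br b x]/br brB !br_mulr /br.
set p := (a * b - b * a) * x; set q := b * (a * x - x * a).
set r := (a * x - x * a) * b; set s := x * (a * b - b * a).
by rewrite opprD (addrC p) addrACA.
Qed.

Lemma br_anti (R : nzRingType) (a b : R) : br a b = - br b a.
Proof. by rewrite /br opprB. Qed.

Lemma brDl (R : nzRingType) (a b x : R) : br (a + b) x = br a x + br b x.
Proof. by rewrite !(br_anti _ x) brD opprD. Qed.
Lemma brNl (R : nzRingType) (a x : R) : br (- a) x = - br a x.
Proof. by rewrite !(br_anti _ x) brN. Qed.
Lemma br0l (R : nzRingType) (x : R) : br 0 x = 0.
Proof. by rewrite br_anti br0 oppr0. Qed.
Lemma brMnl (R : nzRingType) (a x : R) n : br (a *+ n) x = br a x *+ n.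
Proof. by elim: n => [|n IH]; rewrite ?br0l // !mulrSr brDl IH. Qed.

Lemma natmul_eq0 (k : fieldType) (char0 : [pchar k] =i pred0) (V : lmodType k) (x : V) n :
  (0 < n)%N -> x *+ n = 0 -> x = 0.
Proof.
move=> n0; rewrite -scaler_nat => /eqP; rewrite scaler_eq0 => /orP[|/eqP //].
by rewrite ((pcharf0P _).1 char0) eqn0Ngt n0.
Qed.

Section USec.
Variables (k : fieldType) (U : algType k) (H F E : U).
Hypothesis hU : is_Usl2 H F E.
Hypothesis char0 : [pchar k] =i pred0.

Lemma r1 : br H E = E *+ 2. Proof. by case: hU => -[]. Qed.
Lemma r2 : br H F = - (F *+ 2). Proof. by case: hU => -[]. Qed.
Lemma r3 : br E F = H. Proof. by case: hU => -[]. Qed.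

Local Notation D := (br E).

Lemma iterD_add n x y : iter n D (x + y) = iter n D x + iter n D y.
Proof. by elim: n => //= n ->; rewrite brD. Qed.
Lemma iterD0 n : iter n D 0 = 0.
Proof. by elim: n => //= n ->; rewrite br0. Qed.
Lemma iterDZ n (c : k) x : iter n D (c *: x) = c *: iter n D x.
Proof. by elim: n => //= n ->; rewrite brZ. Qed.

Lemma prod_nil n : forall a b x y, (a + b = n)%N -> iter a D x = 0 -> iter b D y = 0 ->
  iter n D (x * y) = 0.
Proof.
elim: n => [|n IH] [|a] [|b] x y //= hab hx hy.
- by rewrite hx mul0r.
- by rewrite hx mul0r iterD0 br0.
- by rewrite hy mulr0 iterD0 br0.
- change (iter n.+1 D (x * y) = 0); rewrite iterSr br_mulr iterD_add.
  rewrite (IH a b.+1 (D x) y) ?(IH a.+1 b x (D y)) ?addr0 //; try lia;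
  by rewrite -iterSr.
Qed.

Lemma nil_all u : exists n, iter n D u = 0.
Proof.
move: u; apply: (gen_all hU (P := fun u => exists n, iter n D u = 0)).
- split.
  + by exists 1%N; rewrite /= /br mulr1 mul1r subrr.
  + move=> x y [a ha] [b hb]; exists (a + b)%N.
    by rewrite iterD_add {1}addnC !iterD ha hb !iterD0 addr0.
  + move=> x y [a ha] [b hb]; exists (a + b)%N; exact: (prod_nil (a := a) (b := b)).
  + by move=> c x [a ha]; exists a; rewrite iterDZ ha scaler0.
- by exists 2%N => /=; rewrite (br_anti E H) r1 brN brMn /br subrr mul0rn oppr0.
- by exists 3%N => /=; rewrite r3 (br_anti E H) r1 brN brMn /br subrr mul0rn oppr0.
- by exists 1%N; rewrite /= /br subrr.
Qed.

Lemma lowest z : br H z = z *+ 2 -> br F z = 0 -> z = 0.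
Proof.
move=> hz fz.
pose v j := iter j D z.
have vS j : v j.+1 = D (v j) by [].
have AD x : br H (D x) = D (br H x) + D x *+ 2.
  by rewrite jacobi r1 brMnl.
have GD x : br F (D x) = D (br F x) - br H x.
  by rewrite jacobi (br_anti F E) r3 brNl.
have c1 j : br H (v j) = v j *+ (2 * j + 2).
  elim: j => [|j IH] //; rewrite vS AD IH brMn -mulrnDr; congr (_ *+ _); lia.
have c2 j : br F (v j.+1) = - (v j *+ (j.+1 * j.+2)).
  elim: j => [|j IH]; first by rewrite vS GD fz br0 sub0r hz.
  rewrite vS GD IH brN brMn c1 -opprD -mulrnDr; congr (- (_ *+ _)); lia.
have [N hN] := nil_all z.
have down i : v (N - i)%N = 0.
  elim: i => [|i IH]; first by rewrite subn0.
  have [lt|ge] := ltnP i N.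
    have e : (N - i = (N - i.+1).+1)%N by lia.
    move: (c2 (N - i.+1)%N); rewrite -e IH br0 => /eqP; rewrite eq_sym oppr_eq0 => /eqP.
    by move=> h; apply: (natmul_eq0 char0 _ h); rewrite muln_gt0 subn_gt0 lt.
  have -> : (N - i.+1 = N - i)%N by lia.
  done.
by move: (down N); rewrite subnn.
Qed.

End USec.

Inductive Gen (k : fieldType) (U : algType k) (S : U -> Prop) : U -> Prop :=
| G_base x : S x -> Gen S x
| G_one : Gen S 1
| G_add x y : Gen S x -> Gen S y -> Gen S (x + y)
| G_mul x y : Gen S x -> Gen S y -> Gen S (x * y)
| G_scale (c : k) x : Gen S x -> Gen S (c *: x).

Lemma gen_comm (k : fieldType) (U : algType k) (S : U -> Prop) :
  (forall a b, S a -> S b -> a * b = b * a) ->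
  forall x y, Gen S x -> Gen S y -> x * y = y * x.
Proof.
move=> hS.
have h1 y : Gen S y -> forall a, S a -> a * y = y * a.
  elim=> [x sx||x z _ hx _ hz|x z _ hx _ hz|c x _ hx] a sa.
  - exact: hS.
  - by rewrite mulr1 mul1r.
  - by rewrite mulrDr mulrDl hx ?hz.
  - by rewrite mulrA hx // -!mulrA hz.
  - by rewrite -scalerAl -scalerAr hx.
move=> x y gx gy; elim: gx y gy => [x0 sx||x0 z _ hx _ hz|x0 z _ hx _ hz|c x0 _ hx] y gy.
- by rewrite h1.
- by rewrite mulr1 mul1r.
- by rewrite mulrDr mulrDl hx ?hz.
- by rewrite -mulrA hz // !mulrA hx.
- by rewrite -scalerAl -scalerAr hx.
Qed.

Lemma intr_neq0 (k : fieldType) (char0 : [pchar k] =i pred0) (n : int) :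
  n != 0 -> (n%:~R : k) != 0.
Proof.
have hn m : (m%:R : k) = 0 -> m = 0%N.
  by move=> /eqP; rewrite ((pcharf0P _).1 char0) => /eqP.
case: n => [m|m] h; apply/eqP.
- by move/hn => e; rewrite e in h.
- by rewrite NegzE intrN => /eqP; rewrite oppr_eq0 => /eqP /hn.
Qed.

Section Span.
Variables (k : fieldType) (U : algType k) (H F E : U).
Hypothesis hU : is_Usl2 H F E.
Hypothesis char0 : [pchar k] =i pred0.

Let r1 := r1 hU.
Let r2 := r2 hU.
Let r3 := r3 hU.

Definition Om := E * F.
Definition Q := Gen (fun x => x = H \/ x = Om).

Lemma Q0 : Q 0.
Proof. by rewrite -(scale0r 1); apply: G_scale; apply: G_one. Qed.
Lemma QN x : Q x -> Q (- x).
Proof. by move=> qx; rewrite -scaleN1r; apply: G_scale. Qed.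
Lemma QB x y : Q x -> Q y -> Q (x - y).
Proof. by move=> qx qy; apply: G_add => //; apply: QN. Qed.
Lemma Qnat n : Q n%:R.
Proof. by rewrite -scaler_nat; apply: G_scale; apply: G_one. Qed.
Lemma QH : Q H. Proof. by apply: G_base; left. Qed.
Lemma QOm : Q Om. Proof. by apply: G_base; right. Qed.

Lemma brHOm : br H Om = 0.
Proof. by rewrite /Om br_mulr r1 r2 mulrN mulrnAl mulrnAr subrr. Qed.

Lemma Qcomm x y : Q x -> Q y -> x * y = y * x.
Proof.
apply: gen_comm => a b [->|->] [->|->] //.
- by apply/eqP; rewrite -subr_eq0; apply/eqP; exact: brHOm.
- by apply/eqP; rewrite eq_sym -subr_eq0; apply/eqP; exact: brHOm.
Qed.

Lemma HE : H * E = E * (H + 2%:R).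
Proof. by rewrite mulrDr mulr_natr -r1 /br addrC subrK. Qed.
Lemma FE : F * E = Om - H.
Proof. by rewrite -r3 /br /Om opprB addrC subrK. Qed.
Lemma HF : H * F = F * (H - 2%:R).
Proof. by rewrite mulrBr mulr_natr -r2 /br addrC subrK. Qed.
Lemma OmF : Om * F = F * (Om + H - 2%:R).
Proof.
have eEF : E * F = F * E + H by rewrite -r3 /br addrC subrK.
by rewrite /Om {1}eEF mulrDl HF -addrA [RHS]mulrDr mulrA.
Qed.

Lemma shiftE q : Q q -> exists q', Q q' /\ q * E = E * q'.
Proof.
elim=> [x [->|->]||x y _ [x' [qx ex]] _ [y' [qy ey]]|x y _ [x' [qx ex]] _ [y' [qy ey]]|c x _ [x' [qx ex]]].
- by exists (H + 2%:R); split; [apply: G_add; [exact: QH|exact: Qnat]|exact: HE].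
- exists (Om - H); split; first by apply: QB; [exact: QOm|exact: QH].
  by rewrite {1}/Om -mulrA FE.
- by exists 1; split; [apply: G_one|rewrite mulr1 mul1r].
- by exists (x' + y'); split; [apply: G_add|rewrite mulrDl mulrDr ex ey].
- by exists (x' * y'); split; [apply: G_mul|rewrite -mulrA ey mulrA ex mulrA].
- by exists (c *: x'); split; [apply: G_scale|rewrite -scalerAl ex scalerAr].
Qed.

Lemma shiftF q : Q q -> exists q', Q q' /\ q * F = F * q'.
Proof.
elim=> [x [->|->]||x y _ [x' [qx ex]] _ [y' [qy ey]]|x y _ [x' [qx ex]] _ [y' [qy ey]]|c x _ [x' [qx ex]]].
- by exists (H - 2%:R); split; [apply: QB; [exact: QH|exact: Qnat]|exact: HF].
- exists (Om + H - 2%:R); split; last exact: OmF.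
  by apply: QB; [apply: G_add; [exact: QOm|exact: QH]|exact: Qnat].
- by exists 1; split; [apply: G_one|rewrite mulr1 mul1r].
- by exists (x' + y'); split; [apply: G_add|rewrite mulrDl mulrDr ex ey].
- by exists (x' * y'); split; [apply: G_mul|rewrite -mulrA ey mulrA ex mulrA].
- by exists (c *: x'); split; [apply: G_scale|rewrite -scalerAl ex scalerAr].
Qed.



Lemma shiftEn n q : Q q -> exists q', Q q' /\ q * E ^+ n = E ^+ n * q'.
Proof.
elim: n q => [|n IH] q qq; first by exists q; rewrite !expr0 mulr1 mul1r.
have [q1 [qq1 e1]] := IH q qq; have [q2 [qq2 e2]] := shiftE qq1.
by exists q2; split => //; rewrite exprSr mulrA e1 -mulrA e2 mulrA.
Qed.

Lemma shiftFn n q : Q q -> exists q', Q q' /\ q * F ^+ n = F ^+ n * q'.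
Proof.
elim: n q => [|n IH] q qq; first by exists q; rewrite !expr0 mulr1 mul1r.
have [q1 [qq1 e1]] := IH q qq; have [q2 [qq2 e2]] := shiftF qq1.
by exists q2; split => //; rewrite exprSr mulrA e1 -mulrA e2 mulrA.
Qed.

Definition piece (w : int) (x : U) : Prop :=
  exists n q, Q q /\ ((w = n%:Z /\ x = E ^+ n * q) \/ (w = - n%:Z /\ x = F ^+ n * q)).

Lemma piece_mulQ w x q : piece w x -> Q q -> piece w (x * q).
Proof.
move=> [n [q0 [qq0 [[-> ->]|[-> ->]]]]] qq; exists n, (q0 * q); (split; [exact: G_mul|]).
- by left; rewrite mulrA.
- by right; rewrite mulrA.
Qed.

Lemma pieceQ q : Q q -> piece 0 q.
Proof. by move=> qq; exists 0%N, q; split => //; left; rewrite expr0 mul1r. Qed.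

Lemma piece_EF a b : piece (a%:Z - b%:Z) (E ^+ a * F ^+ b).
Proof.
elim: a b => [|a IH] b.
  by exists b, 1; split; [exact: G_one|right; rewrite expr0 mul1r mulr1 sub0r].
case: b => [|b].
  by exists a.+1, 1; split; [exact: G_one|left; rewrite expr0 !mulr1 subr0].
have [q [qq e]] := shiftFn b QOm.
have -> : E ^+ a.+1 * F ^+ b.+1 = E ^+ a * F ^+ b * q.
  by rewrite exprSr exprS -mulrA (mulrA E) -/Om e !mulrA.
have -> : (a.+1%:Z - b.+1%:Z) = a%:Z - b%:Z by lia.
exact: piece_mulQ.
Qed.

Lemma piece_FE a b : piece (b%:Z - a%:Z) (F ^+ a * E ^+ b).
Proof.
elim: a b => [|a IH] b.
  by exists b, 1; split; [exact: G_one|left; rewrite expr0 mul1r mulr1 subr0].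
case: b => [|b].
  by exists a.+1, 1; split; [exact: G_one|right; rewrite expr0 !mulr1 sub0r].
have [q [qq e]] := shiftEn b (QB QOm QH).
have -> : F ^+ a.+1 * E ^+ b.+1 = F ^+ a * E ^+ b * q.
  by rewrite exprSr exprS -mulrA (mulrA F) FE e !mulrA.
have -> : (b.+1%:Z - a.+1%:Z) = b%:Z - a%:Z by lia.
exact: piece_mulQ.
Qed.

Lemma piece_eq w w' x : w = w' -> piece w x -> piece w' x.
Proof. by move=> ->. Qed.

Lemma piece_mul w w' x y : piece w x -> piece w' y -> piece (w + w') (x * y).
Proof.
move=> [a [q [qq hx]]] [b [q' [qq' hy]]].
case: hx => -[-> ->]; case: hy => -[-> ->].
- have [q2 [qq2 e]] := shiftEn b qq.
  exists (a + b)%N, (q2 * q'); split; first exact: G_mul.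
  by left; split; [lia|rewrite -mulrA (mulrA q) e exprD !mulrA].
- have [q2 [qq2 e]] := shiftFn b qq.
  rewrite -mulrA (mulrA q) e !mulrA -mulrA.
  apply: piece_mulQ; last exact: G_mul.
  by apply: piece_eq (piece_EF a b); lia.
- have [q2 [qq2 e]] := shiftEn b qq.
  rewrite -mulrA (mulrA q) e !mulrA -mulrA.
  apply: piece_mulQ; last exact: G_mul.
  by apply: piece_eq (piece_FE a b); lia.
- have [q2 [qq2 e]] := shiftFn b qq.
  exists (a + b)%N, (q2 * q'); split; first exact: G_mul.
  by right; split; [lia|rewrite -mulrA (mulrA q) e exprD !mulrA].
Qed.

Lemma pieceZ w (c : k) x : piece w x -> piece w (c *: x).
Proof.
move=> [n [q [qq [[-> ->]|[-> ->]]]]]; exists n, (c *: q); split; try exact: G_scale.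
- by left; rewrite scalerAr.
- by right; rewrite scalerAr.
Qed.

Lemma piece0 w : piece w 0.
Proof.
case: w => [n|n].
- by exists n, 0; split; [exact: Q0|left; rewrite mulr0].
- by exists n.+1, 0; split; [exact: Q0|right; rewrite mulr0 NegzE].
Qed.

Lemma piece_add w x y : piece w x -> piece w y -> piece w (x + y).
Proof.
move=> [a [q [qq hx]]] [b [q' [qq' hy]]].
case: hx => -[ea ->]; case: hy => -[eb ->]; subst w.
- have e : a = b by lia.
  by subst; exists b, (q + q'); split; [exact: G_add|left; split => //; rewrite mulrDr].
- have [e1 e2] : a = 0%N /\ b = 0%N by lia. subst.
  by exists 0%N, (q + q'); split; [exact: G_add|left; split => //; rewrite !expr0 !mul1r].
- have [e1 e2] : a = 0%N /\ b = 0%N by lia. subst.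
  by exists 0%N, (q + q'); split; [exact: G_add|left; split => //; rewrite !expr0 !mul1r].
- have e : a = b by lia.
  by subst; exists b, (q + q'); split; [exact: G_add|right; split => //; rewrite mulrDr].
Qed.

Inductive Spn : seq int -> U -> Prop :=
| Snil : Spn [::] 0
| Scons w ws x u : piece w x -> Spn ws u -> Spn (w :: ws) (x + u).

Definition SP u := exists ws, Spn ws u.

Lemma Spn_add ws ws' u u' : Spn ws u -> Spn ws' u' -> Spn (ws ++ ws') (u + u').
Proof.
elim=> [|w ws0 x u0 px _ IH] h'; first by rewrite add0r.
by rewrite -addrA; apply: Scons => //; apply: IH.
Qed.

Lemma SP_mul_piece w x u : piece w x -> SP u -> SP (x * u).
Proof.
move=> px [ws hu]; elim: hu => [|w' ws0 y u0 py _ [zs IH]].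
  by exists [::]; rewrite mulr0; exact: Snil.
by exists ((w + w') :: zs); rewrite mulrDr; apply: Scons => //; apply: piece_mul.
Qed.

Lemma SP_all u : SP u.
Proof.
move: u; apply: (gen_all hU (P := SP)).
- split.
  + by exists [:: 0]; rewrite -[1]addr0; apply: Scons; [apply: pieceQ; apply: G_one|apply: Snil].
  + by move=> x y [ws hx] [ws' hy]; exists (ws ++ ws'); apply: Spn_add.
  + move=> x y [ws hx] hy; elim: hx => [|w ws0 z u0 pz _ [zs IH]].
      by exists [::]; rewrite mul0r; exact: Snil.
    have [zs' h'] := SP_mul_piece pz hy.
    by exists (zs' ++ zs); rewrite mulrDl; apply: Spn_add.
  + move=> c x [ws hx]; exists ws; elim: hx => [|w ws0 z u0 pz _ IH].
      by rewrite scaler0; exact: Snil.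
    by rewrite scalerDr; apply: Scons => //; apply: pieceZ.
- exists [:: 0]; rewrite -[H]addr0; apply: Scons; [apply: pieceQ; exact: QH|exact: Snil].
- exists [:: -1]; rewrite -[F]addr0; apply: Scons; last exact: Snil.
  by exists 1%N, 1; split; [exact: G_one|right; rewrite expr1 mulr1].
- exists [:: 1]; rewrite -[E]addr0; apply: Scons; last exact: Snil.
  by exists 1%N, 1; split; [exact: G_one|left; rewrite expr1 mulr1].
Qed.

Definition cw (w : int) : k := (2 * w)%:~R.

Lemma brHEn n : br H (E ^+ n) = E ^+ n *+ (2 * n).
Proof.
elim: n => [|n IH]; first by rewrite expr0 /br mulr1 mul1r subrr.
rewrite exprSr br_mulr IH r1 mulrnAl mulrnAr -mulrnDr; congr (_ *+ _); lia.
Qed.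

Lemma brHFn n : br H (F ^+ n) = - (F ^+ n *+ (2 * n)).
Proof.
elim: n => [|n IH]; first by rewrite expr0 /br mulr1 mul1r subrr oppr0.
rewrite exprSr br_mulr IH r2 mulNr mulrN mulrnAl mulrnAr -opprD -mulrnDr.
congr (- (_ *+ _)); lia.
Qed.

Lemma brHQ q : Q q -> br H q = 0.
Proof. by move=> qq; rewrite /br (Qcomm QH qq) subrr. Qed.

Lemma piece_eig w x : piece w x -> br H x = cw w *: x.
Proof.
move=> [n [q [qq [[-> ->]|[-> ->]]]]]; rewrite br_mulr (brHQ qq) mulr0 addr0.
- by rewrite brHEn mulrnAl /cw scaler_int -mulrz_nat; congr (_ *~ _); lia.
- by rewrite brHFn mulNr mulrnAl /cw scaler_int -mulrz_nat -mulrNz; congr (_ *~ _); lia.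
Qed.

Fixpoint Op (ws : seq int) (x : U) : U :=
  if ws is w :: ws' then br H (Op ws' x) - cw w *: Op ws' x else x.

Fixpoint prodc (ws : seq int) (c : k) : k :=
  if ws is w :: ws' then (c - cw w) * prodc ws' c else 1.

Lemma Op_add ws x y : Op ws (x + y) = Op ws x + Op ws y.
Proof. by elim: ws => //= w ws ->; rewrite brD scalerDr opprD addrACA. Qed.

Lemma Op_eig ws c x : br H x = c *: x -> Op ws x = prodc ws c *: x.
Proof.
move=> hx; elim: ws => [|w ws IH] /=; first by rewrite scale1r.
by rewrite IH brZ hx !scalerA -scalerBl mulrBl mulrC.
Qed.

Lemma Op_Spn ws u : Spn ws u -> Op ws u = 0.
Proof.
elim=> [|w ws0 x u0 px _ IH] //=; rewrite !Op_add IH !addr0.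
by rewrite (Op_eig ws0 (piece_eig px)) brZ (piece_eig px) !scalerA mulrC subrr.
Qed.

Lemma split_w w0 ws u : Spn ws u -> exists y z zs,
  [/\ u = y + z, piece w0 y, Spn zs z & all (fun w => w != w0) zs].
Proof.
elim=> [|w ws0 x u0 px _ [y [z [zs [e py hz hzs]]]]].
  by exists 0, 0, [::]; split; [rewrite addr0|exact: piece0|exact: Snil|].
have [ew|nw] := eqVneq w w0.
  subst w0; exists (x + y), z, zs; split => //; first by rewrite e addrA.
  exact: piece_add.
exists y, (x + z), (w :: zs); split => //=; first by rewrite e addrCA.
  exact: Scons.
by rewrite nw.
Qed.

Lemma prodc_neq0 w0 zs : all (fun w => w != w0) zs -> prodc zs (cw w0) != 0.
Proof.
elim: zs => [|w zs IH] /=; first by rewrite oner_eq0.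
case/andP=> nw hzs; rewrite mulf_neq0 ?IH //.
rewrite /cw -intrB; apply: (intr_neq0 char0).
by apply/eqP => h; move/eqP: nw; apply; lia.
Qed.

Lemma factorF x : br H x = - (x *+ 2) -> exists q, Q q /\ x = F * q.
Proof.
move=> hx; have [ws hws] := SP_all x.
have [y [z [zs [e py hz hzs]]]] := split_w (-1) hws.
have hy := piece_eig py.
have cm1 : cw (-1) = - 2%:R by rewrite /cw intrN.
have ez : br H z = cw (-1) *: z.
  have -> : z = x - y by rewrite e addrC addKr.
  by rewrite brB hx hy scalerBr; congr (_ - _); rewrite cm1 scaleNr scaler_nat.
have z0 : z = 0.
  have := Op_Spn hz; rewrite (Op_eig zs ez) => /eqP; rewrite scaler_eq0 => /orP[|/eqP //].
  by rewrite (negbTE (prodc_neq0 hzs)).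
rewrite z0 addr0 in e; subst x.
case: py => n [q [qq [[en _]|[en ey]]]]; first by lia.
have e1 : n = 1%N by lia.
by subst n; exists q; rewrite ey expr1.
Qed.
End Span.
Lemma ps_mul_cst (k : fieldType) (c d : k) : ps_mul (ps_cst c) (ps_cst d) = ps_cst (c * d).
Proof.
apply: functional_extensionality => n; rewrite /ps_mul big_ord_recl /=.
rewrite subn0 big1 ?addr0; last by move=> i _; rewrite /= mul0r.
by case: n => [|n] /=; rewrite ?mulr0.
Qed.

Lemma ps_add_cst (k : fieldType) (c d : k) : ps_add (ps_cst c) (ps_cst d) = ps_cst (c + d).
Proof. by apply: functional_extensionality => -[|n] //=; rewrite /ps_add /= addr0. Qed.

Definition Acp (k : fieldType) (A : nzRingType) (act : (nat -> k) -> A -> A)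
  (hk : kh_algebra act) : Type := A.

Section AcpInst.
Variables (k : fieldType) (A : nzRingType) (act : (nat -> k) -> A -> A) (hk : kh_algebra act).
HB.instance Definition _ := GRing.NzRing.on (Acp hk).
Definition acp_scale (c : k) (a : Acp hk) : Acp hk := act (ps_cst c) a.
Lemma acp_scalerA c d v : acp_scale c (acp_scale d v) = acp_scale (c * d) v.
Proof. by have [_ _ hm _ _] := hk; rewrite /acp_scale -hm ps_mul_cst. Qed.
Lemma acp_scale1r : left_id 1 acp_scale.
Proof. move=> v; have [_ _ _ h1 _] := hk; exact: h1. Qed.
Lemma acp_scalerDr : right_distributive acp_scale +%R.
Proof. move=> c x y; have [ha _ _ _ _] := hk; exact: ha. Qed.
Lemma acp_scalerDl v : {morph acp_scale^~ v: a b / a + b}.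
Proof. move=> a b; have [_ ha _ _ _] := hk; by rewrite /acp_scale -ps_add_cst ha. Qed.
HB.instance Definition _ := GRing.Zmodule_isLmodule.Build k (Acp hk)
  acp_scalerA acp_scale1r acp_scalerDr acp_scalerDl.
Lemma acp_scalerAl (a : k) (u v : Acp hk) : a *: (u * v) = (a *: u) * v.
Proof. by have [_ _ _ _ hm] := hk; rewrite /GRing.scale /= /acp_scale (hm _ u v).1. Qed.
HB.instance Definition _ := GRing.Lmodule_isLalgebra.Build k (Acp hk) acp_scalerAl.
Lemma acp_scalerAr (a : k) (u v : Acp hk) : a *: (u * v) = u * (a *: v).
Proof. by have [_ _ _ _ hm] := hk; rewrite /GRing.scale /= /acp_scale (hm _ u v).2. Qed.
HB.instance Definition _ := GRing.Lalgebra_isAlgebra.Build k (Acp hk) acp_scalerAr.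
End AcpInst.


Section Ser.
Variables (k : fieldType) (U : algType k).
Local Notation S := (nat -> U).

Definition sz : S := fun _ => 0.
Definition shift (f : S) : S := fun n => f n.+1.
Definition sh (x : S) : S := ser_act (@ps_h k) x.

Lemma ps_h0 : @ps_h k 0 = 0. Proof. by []. Qed.
Lemma ps_h1 : @ps_h k 1 = 1. Proof. by []. Qed.
Lemma ps_hSS n : @ps_h k n.+2 = 0. Proof. by []. Qed.

Lemma sh0 x : sh x 0 = 0.
Proof. by rewrite /sh /ser_act big_ord1 ps_h0 scale0r. Qed.

Lemma shS x n : sh x n.+1 = x n.
Proof.
rewrite /sh /ser_act big_ord_recl ps_h0 scale0r add0r big_ord_recl /= ps_h1 scale1r.
rewrite big1 ?addr0; last by move=> i _; rewrite /bump /= ps_hSS scale0r.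
by rewrite subn1.
Qed.

Lemma shift_sh x : shift (sh x) = x.
Proof. by apply: functional_extensionality => n; rewrite /shift shS. Qed.

Lemma decomp (f : S) : f = ser_add (ser_cst (f 0%N)) (sh (shift f)).
Proof.
by apply: functional_extensionality => -[|n]; rewrite /ser_add ?sh0 ?shS /= ?addr0 ?add0r.
Qed.

Lemma ser_mul0 (x y : S) : ser_mul x y 0 = x 0%N * y 0%N.
Proof. by rewrite /ser_mul big_ord1. Qed.

Lemma ser_mul_cst u v : ser_mul (ser_cst u) (ser_cst v) = ser_cst (u * v) :> S.
Proof.
apply: functional_extensionality => n; rewrite /ser_mul big_ord_recl /= subn0.
rewrite big1 ?addr0; last by move=> i _; rewrite /= mul0r.
by case: n => [|n] //=; rewrite mulr0.
Qed.

Lemma ser_act_cst (c : k) (x : S) n : ser_act (ps_cst c) x n = c *: x n.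
Proof.
rewrite /ser_act big_ord_recl /= subn0 big1 ?addr0 //.
by move=> i _; rewrite /= scale0r.
Qed.

Lemma ser_cst0 : ser_cst 0 = sz.
Proof. by apply: functional_extensionality => -[|n]. Qed.

Lemma add_sz (x : S) : ser_add sz x = x.
Proof. by apply: functional_extensionality => n; rewrite /ser_add /sz add0r. Qed.

Lemma ps_decomp (s : nat -> k) :
  s = ps_add (ps_cst (s 0%N)) (ps_mul (ps_h k) (fun n => s n.+1)).
Proof.
apply: functional_extensionality => -[|n]; rewrite /ps_add /ps_mul.
  by rewrite big_ord1 ps_h0 mul0r addr0.
rewrite big_ord_recl ps_h0 mul0r add0r big_ord_recl /= ps_h1 mul1r.
rewrite big1 ?addr0 /=; last by move=> i _; rewrite /bump /= ps_hSS mul0r.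
by rewrite add0r subn1.
Qed.

End Ser.

Section Tri.
Variables (k : fieldType) (U : algType k).
Local Notation S := (nat -> U).

Lemma tri_bij (L : S -> S) (P : U -> S) :
  (forall f, L f = ser_add (P (f 0%N)) (sh (L (shift f)))) ->
  (forall u, P u 0%N = u) -> bijective L.
Proof.
move=> hL hP.
have L0 f : L f 0%N = f 0%N by rewrite hL /ser_add sh0 addr0 hP.
have LS f n : L f n.+1 = P (f 0%N) n.+1 + L (shift f) n by rewrite {1}hL /ser_add shS.
have inj : forall n f f', L f = L f' -> f n = f' n.
  elim=> [|n IH] f f' e; first by rewrite -L0 e L0.
  have e0 : f 0%N = f' 0%N by rewrite -L0 e L0.
  apply: (IH (shift f) (shift f')); apply: functional_extensionality => m.
  by apply: (@addrI _ (P (f 0%N) m.+1)); rewrite -LS e LS e0.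
pose T (t : S) : S := fun n => t n.+1 - P (t 0%N) n.+1.
pose ft (t : S) : S := fun n => iter n T t 0%N.
have shft t : shift (ft t) = ft (T t).
  by apply: functional_extensionality => n; rewrite /shift /ft iterSr.
have surj : forall n t, L (ft t) n = t n.
  elim=> [|n IH] t; first by rewrite L0.
  by rewrite LS shft IH /T /ft /= addrC subrK.
have rK : forall t, L (ft t) = t by move=> t; apply: functional_extensionality => n; apply: surj.
exists ft => // x; apply: functional_extensionality => n; apply: inj; exact: rK.
Qed.

End Tri.

Section Trans.
Variables (k : fieldType) (U : algType k) (A : nzRingType) (act : (nat -> k) -> A -> A).
Hypothesis hk : kh_algebra act.
Variable g : (nat -> U) -> A.
Hypothesis hg : kh_alg_iso act g.
Local Notation S := (nat -> U).

Lemma g_inj : injective g. Proof. by case: hg => /bij_inj. Qed.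
Lemma g_add x y : g (ser_add x y) = g x + g y. Proof. by case: hg. Qed.
Lemma g_mul x y : g (ser_mul x y) = g x * g y. Proof. by case: hg. Qed.
Lemma g_one : g (ser_cst 1) = 1. Proof. by case: hg. Qed.
Lemma g_act s x : g (ser_act s x) = act s (g x). Proof. by case: hg. Qed.

Lemma act_add s a b : act s (a + b) = act s a + act s b. Proof. by case: hk => h _ _ _ _; exact: h. Qed.
Lemma act_addl s t a : act (ps_add s t) a = act s a + act t a. Proof. by case: hk. Qed.
Lemma act_mul s t a : act (ps_mul s t) a = act s (act t a). Proof. by case: hk. Qed.
Lemma act_Ml s a b : act s (a * b) = act s a * b. Proof. by case: hk => _ _ _ _ h; case: (h s a b). Qed.
Lemma act_Mr s a b : act s (a * b) = a * act s b. Proof. by case: hk => _ _ _ _ h; case: (h s a b). Qed.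

Lemma g_sz : g (sz U) = 0.
Proof.
have := g_add (sz U) (sz U); rewrite add_sz -{1}[g (sz U)]addr0 => /addrI.
by move=> <-.
Qed.

Lemma act0 s : act s 0 = 0.
Proof.
have := act_add s 0 0; rewrite addr0 -{1}[act s 0]addr0 => /addrI.
by move=> <-.
Qed.

Lemma T1 (a b y : S) :
  ser_mul (ser_add a (sh b)) y = ser_add (ser_mul a y) (sh (ser_mul b y)).
Proof. by apply: g_inj; rewrite !(g_mul, g_add, g_act) mulrDl act_Ml. Qed.

Lemma T2 (a a' b' : S) :
  ser_mul a (ser_add a' (sh b')) = ser_add (ser_mul a a') (sh (ser_mul a b')).
Proof. by apply: g_inj; rewrite !(g_mul, g_add, g_act) mulrDr act_Mr. Qed.

Lemma T7 (s : nat -> k) (x : S) :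
  ser_act s x = ser_add (ser_act (ps_cst (s 0%N)) x) (sh (ser_act (fun n => s n.+1) x)).
Proof.
apply: g_inj; rewrite !(g_act, g_add) {1}(ps_decomp s) act_addl act_mul.
by [].
Qed.

Lemma inhA_g (x : S) : in_hA act (g x) <-> x 0%N = 0.
Proof.
have [gi gK Kg] : bijective g by case: hg.
split.
- move=> [b eb]; rewrite -(Kg b) -g_act in eb.
  by move/g_inj: eb => ->; rewrite -/(sh _) sh0.
- move=> x0; exists (g (shift x)); rewrite -g_act -/(sh _).
  by congr g; rewrite {1}(decomp x) x0 ser_cst0 add_sz.
Qed.

Lemma inhA_add a b : in_hA act a -> in_hA act b -> in_hA act (a + b).
Proof. by move=> [x ->] [y ->]; exists (x + y); rewrite act_add. Qed.
Lemma inhA_opp a : in_hA act a -> in_hA act (- a).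
Proof.
move=> [x ->]; exists (- x); apply/eqP; rewrite eq_sym -subr_eq0 opprK -act_add addNr act0 //.
Qed.
Lemma inhA0 : in_hA act 0.
Proof. by exists 0; rewrite act0. Qed.

End Trans.

Section Trans2.
Variables (k : fieldType) (U : algType k) (A : nzRingType) (act : (nat -> k) -> A -> A).
Hypothesis hk : kh_algebra act.
Variable g : (nat -> U) -> A.
Hypothesis hg : kh_alg_iso act g.
Local Notation S := (nat -> U).

Definition sopp (y : S) : S := fun n => - y n.

Lemma g_opp y : g (sopp y) = - g y.
Proof.
apply: (@addrI _ (g y)); rewrite -(g_add hg) subrr.
have -> : ser_add y (sopp y) = sz U.
  by apply: functional_extensionality => n; rewrite /ser_add /sopp subrr.
by rewrite (g_sz hg).
Qed.

Lemma ser_cst_add (u v : U) : ser_cst (u + v) = ser_add (ser_cst u) (ser_cst v).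
Proof. by apply: functional_extensionality => -[|n]; rewrite /ser_add //= addr0. Qed.
Lemma ser_cst_opp (u : U) : ser_cst (- u) = sopp (ser_cst u).
Proof. by apply: functional_extensionality => -[|n]; rewrite /sopp //= oppr0. Qed.

Lemma ser_mul_cstl u (y : S) n : ser_mul (ser_cst u) y n = u * y n.
Proof.
rewrite /ser_mul big_ord_recl /= subn0 big1 ?addr0 //.
by move=> i _; rewrite /= mul0r.
Qed.

Lemma ser_mul_cstr (y : S) u n : ser_mul y (ser_cst u) n = y n * u.
Proof.
rewrite /ser_mul big_ord_recr /= subnn big1 ?add0r //.
move=> i _; have : (0 < n - i)%N by rewrite subn_gt0.
by case: (n - i)%N => [|m] //= _; rewrite mulr0.
Qed.

Definition gc (u : U) : A := g (ser_cst u).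
Lemma gc_add u v : gc (u + v) = gc u + gc v.
Proof. by rewrite /gc ser_cst_add (g_add hg). Qed.
Lemma gc_opp u : gc (- u) = - gc u.
Proof. by rewrite /gc ser_cst_opp g_opp. Qed.
Lemma gc_mul u v : gc (u * v) = gc u * gc v.
Proof. by rewrite /gc -ser_mul_cst (g_mul hg). Qed.
Lemma gc_sub u v : gc (u - v) = gc u - gc v.
Proof. by rewrite gc_add gc_opp. Qed.
Lemma gc_br u v : gc (br u v) = br (gc u) (gc v).
Proof. by rewrite /br gc_sub !gc_mul. Qed.
Lemma gc_muln u n : gc (u *+ n) = gc u *+ n.
Proof.
elim: n => [|n IH]; last by rewrite !mulrSr gc_add IH.
by rewrite !mulr0n /gc ser_cst0 (g_sz hg).
Qed.
Lemma gc_scale (c : k) u : gc (c *: u) = act (ps_cst c) (gc u).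
Proof.
rewrite /gc -(g_act hg); congr g; apply: functional_extensionality => n.
by rewrite ser_act_cst; case: n => [|n] //=; rewrite scaler0.
Qed.

Lemma br_coef u (d : S) : br (gc u) (g d) = g (fun n => br u (d n)).
Proof.
have -> : (fun n => br u (d n)) = ser_add (ser_mul (ser_cst u) d) (sopp (ser_mul d (ser_cst u))).
  by apply: functional_extensionality => n; rewrite /ser_add /sopp ser_mul_cstl ser_mul_cstr.
by rewrite (g_add hg) g_opp !(g_mul hg).
Qed.

Lemma br_coefE u (d z : S) : br (gc u) (g d) = g z -> forall m, br u (d m) = z m.
Proof.
move=> e m; rewrite br_coef in e; move/(g_inj hg): e => e.
exact: (f_equal (fun f => f m) e).
Qed.

Lemma g_sub (x y : S) : g x - g y = g (ser_add x (sopp y)).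
Proof. by rewrite (g_add hg) g_opp. Qed.

Lemma g_muln (x : S) n : g x *+ n = g (fun m => x m *+ n).
Proof.
elim: n => [|n IH].
  by rewrite mulr0n -(g_sz hg); congr g; apply: functional_extensionality => m; rewrite mulr0n.
rewrite mulrSr IH -(g_add hg); congr g; apply: functional_extensionality => m.
by rewrite /ser_add mulrSr.
Qed.

Lemma g_scst_inj u v : g (ser_cst u) = g (ser_cst v) -> u = v.
Proof. by move/(g_inj hg)/(f_equal (fun f => f 0%N)). Qed.

End Trans2.

Section Main.
Variables (k : fieldType) (char0 : [pchar k] =i pred0) (U : algType k) (H F E : U).
Hypothesis hU : is_Usl2 H F E.
Variables (A : nzRingType) (act : (nat -> k) -> A -> A) (HA XmA XpA : A).
Hypothesis hk : kh_algebra act.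
Hypothesis arel : a_rel HA XmA XpA.
Variable g : (nat -> U) -> A.
Hypothesis hg : kh_alg_iso act g.
Hypothesis hgH : g (ser_cst H) = HA.
Hypothesis hbar : bar_a_iso H F E act HA XmA XpA g.
Local Notation S := (nat -> U).

Lemma g_surj a : exists x, g x = a.
Proof. by case: hg => -[gi _ Kg] _ _ _ _; exists (gi a). Qed.
Definition ginv a : S := proj1_sig (constructive_indefinite_description _ (g_surj a)).
Lemma ginvK a : g (ginv a) = a.
Proof. exact: (proj2_sig (constructive_indefinite_description _ (g_surj a))). Qed.
Lemma gK x : ginv (g x) = x.
Proof. by apply: (g_inj hg); rewrite ginvK. Qed.

Definition Xp := ginv XmA.

Lemma gcH : gc g H = HA. Proof. exact: hgH. Qed.

Lemma Xp_weight m : br H (Xp m) = - (Xp m *+ 2).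
Proof.
have e : br (gc g H) (g Xp) = g (sopp (fun n => Xp n *+ 2)).
  by rewrite gcH (g_opp hg) -(g_muln hg) /Xp ginvK; case: arel.
exact: (br_coefE hg e).
Qed.

Lemma Xp0 : Xp 0%N = F.
Proof.
case: hbar => _ _ _ h _; rewrite -(ginvK XmA) (g_sub hg) in h.
by move/(inhA_g hg): h => /= /eqP; rewrite /ser_add /sopp subr_eq0 => /eqP e; rewrite /Xp -e.
Qed.

Lemma qex m : exists q, Q H F E q /\ Xp m = F * q.
Proof. exact: (factorF hU char0 (Xp_weight m)). Qed.
Definition qf m : U := proj1_sig (constructive_indefinite_description _ (qex m)).
Lemma qf_spec m : Q H F E (qf m) /\ Xp m = F * qf m.
Proof. exact: (proj2_sig (constructive_indefinite_description _ (qex m))). Qed.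

Definition alpha : S := fun m => if m is 0%N then 1 else qf m.
Lemma alpha0 : alpha 0%N = 1. Proof. by []. Qed.
Lemma alphaQ m : Q H F E (alpha m).
Proof. by case: m => [|m] /=; [exact: G_one|case: (qf_spec m.+1)]. Qed.
Lemma Xp_eq : Xp = ser_mul (ser_cst F) alpha.
Proof.
apply: functional_extensionality => m; rewrite ser_mul_cstl.
by case: m => [|m] /=; [rewrite Xp0 mulr1|case: (qf_spec m.+1)].
Qed.

Lemma rinv (x : S) : x 0%N = 1 -> exists y, ser_mul x y = ser_cst 1 /\ y 0%N = 1.
Proof.
move=> x0.
have hb : bijective (ser_mul x).
  apply: (@tri_bij _ _ _ (fun u => ser_mul x (ser_cst u))).
    by move=> f; rewrite {1}(decomp f) (T2 hk hg).
  by move=> u; rewrite ser_mul0 x0 mul1r.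
case: hb => gi _ Kg; exists (gi (ser_cst 1)); split; first exact: Kg.
by have := f_equal (fun f => f 0%N) (Kg (ser_cst 1)); rewrite /= ser_mul0 x0 mul1r.
Qed.

Definition beta : S := proj1_sig (constructive_indefinite_description _ (rinv alpha0)).
Lemma beta_spec : ser_mul alpha beta = ser_cst 1 /\ beta 0%N = 1.
Proof. exact: (proj2_sig (constructive_indefinite_description _ (rinv alpha0))). Qed.

Lemma ab : g alpha * g beta = 1.
Proof. by rewrite -(g_mul hg) beta_spec.1 (g_one hg). Qed.
Lemma ba : g beta * g alpha = 1.
Proof.
have [c [hc _]] := rinv beta_spec.2.
have bc : g beta * g c = 1 by rewrite -(g_mul hg) hc (g_one hg).
have e : g alpha = g c by rewrite -[g alpha]mulr1 -bc mulrA ab mul1r.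
by rewrite e bc.
Qed.

Lemma comm_alpha u : (forall q, Q H F E q -> u * q = q * u) ->
  gc g u * g alpha = g alpha * gc g u.
Proof.
move=> hq; rewrite /gc -!(g_mul hg); congr g; apply: functional_extensionality => m.
rewrite ser_mul_cstl ser_mul_cstr hq //; exact: alphaQ.
Qed.

Lemma a_commH : HA * g alpha = g alpha * HA.
Proof. by rewrite -gcH; apply: comm_alpha => q qq; exact: (Qcomm hU (QH H F E) qq). Qed.
Lemma a_commOm : gc g (E * F) * g alpha = g alpha * gc g (E * F).
Proof. by apply: comm_alpha => q qq; exact: (Qcomm hU (QOm H F E) qq). Qed.
Lemma b_commH : HA * g beta = g beta * HA.
Proof.
by rewrite -[HA * _]mul1r -ba -mulrA (mulrA _ HA) -a_commH -!mulrA ab mulr1.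
Qed.

Definition EA := gc g E.
Definition FA := gc g F.
Definition Y := g beta * EA.

Lemma XmA_eq : XmA = FA * g alpha.
Proof. by rewrite -(ginvK XmA) -/Xp Xp_eq (g_mul hg). Qed.

Lemma rel1 : br HA Y = Y *+ 2.
Proof.
rewrite /Y br_mulr {1}/br b_commH subrr mul0r add0r.
by rewrite /EA -gcH -(gc_br hg) (r1 hU) (gc_muln hg) mulrnAr.
Qed.

Lemma rel3 : br Y XmA = HA.
Proof.
rewrite /Y XmA_eq /br -mulrA (mulrA EA) /EA /FA -(gc_mul hg) a_commOm mulrA ba mul1r.
rewrite -(mulrA FA) (mulrA _ (g beta)) ab mul1r /FA -(gc_mul hg) -(gc_sub hg).
by rewrite -/(br E F) (r3 hU) gcH.
Qed.

Lemma sl2_Acp : sl2_rel (HA : Acp hk) (XmA : Acp hk) (Y : Acp hk).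
Proof.
split; first exact: rel1.
- by case: arel.
- exact: rel3.
Qed.


Definition psi_ex := (proj2 hU) _ _ _ _ sl2_Acp.
Definition psi : U -> Acp hk := proj1_sig (constructive_indefinite_description _ psi_ex).
Lemma psi_spec : [/\ alg_hom psi, psi H = HA, psi F = XmA, psi E = Y &
  forall f' : U -> Acp hk, alg_hom f' -> f' H = HA -> f' F = XmA -> f' E = Y -> f' =1 psi].
Proof. exact: (proj2_sig (constructive_indefinite_description _ psi_ex)). Qed.

Definition psiS (u : U) : S := ginv (psi u).
Lemma g_psiS u : g (psiS u) = psi u. Proof. exact: ginvK. Qed.

Lemma psiS_add u v : psiS (u + v) = ser_add (psiS u) (psiS v).
Proof. by apply: (g_inj hg); rewrite (g_add hg) !g_psiS; case: psi_spec => -[]. Qed.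
Lemma psiS_mul u v : psiS (u * v) = ser_mul (psiS u) (psiS v).
Proof. by apply: (g_inj hg); rewrite (g_mul hg) !g_psiS; case: psi_spec => -[]. Qed.
Lemma psiS_scale (c : k) u : psiS (c *: u) = ser_act (ps_cst c) (psiS u).
Proof. by apply: (g_inj hg); rewrite (g_act hg) !g_psiS; case: psi_spec => -[]. Qed.
Lemma psiS_one : psiS 1 = ser_cst 1.
Proof. by apply: (g_inj hg); rewrite (g_one hg) !g_psiS; case: psi_spec => -[]. Qed.
Lemma psiS_zero : psiS 0 = sz U.
Proof.
apply: (g_inj hg); rewrite (g_sz hg) g_psiS.
have := psiS_add 0 0; rewrite addr0 => /(f_equal g); rewrite (g_add hg) g_psiS.
by rewrite -{1}[psi 0]addr0 => /addrI <-.
Qed.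
Lemma psiS_H : psiS H = ser_cst H.
Proof. by apply: (g_inj hg); rewrite g_psiS hgH; case: psi_spec. Qed.
Lemma psiS_F : psiS F = Xp.
Proof. by apply: (g_inj hg); rewrite g_psiS /Xp ginvK; case: psi_spec. Qed.
Lemma psiS_E : psiS E = ser_mul beta (ser_cst E).
Proof. by apply: (g_inj hg); rewrite g_psiS (g_mul hg); case: psi_spec. Qed.

Lemma psiS0c u : psiS u 0%N = u.
Proof.
have [f0 [_ _ _ _ u0]] := (proj2 hU) _ _ _ _ (proj1 hU).
have hth : alg_hom (fun u => psiS u 0%N).
  split.
  - by move=> x y; rewrite psiS_add.
  - by move=> x y; rewrite psiS_mul ser_mul0.
  - by rewrite psiS_one.
  - by move=> c x; rewrite psiS_scale ser_act_cst.
have e1 := u0 _ hth; rewrite psiS_H psiS_F Xp0 psiS_E ser_mul0 beta_spec.2 mul1r in e1.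
have e2 := u0 _ (alg_hom_id U).
by rewrite (e1 erefl erefl erefl u) -(e2 erefl erefl erefl u).
Qed.

Definition Phi (f : S) : S := fun n => \sum_(m < n.+1) psiS (f m) (n - m)%N.

Lemma Phi_rec f : Phi f = ser_add (psiS (f 0%N)) (sh (Phi (shift f))).
Proof.
apply: functional_extensionality => -[|n]; rewrite /ser_add ?sh0 ?shS /Phi.
  by rewrite big_ord1 addr0.
by rewrite big_ord_recl subn0.
Qed.

Lemma Phi0 f : Phi f 0%N = f 0%N.
Proof. by rewrite Phi_rec /ser_add sh0 addr0 psiS0c. Qed.

Lemma Phi_bij : bijective Phi.
Proof. exact: (tri_bij Phi_rec psiS0c). Qed.

Lemma Phi_add f f' : Phi (ser_add f f') = ser_add (Phi f) (Phi f').
Proof.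
apply: functional_extensionality => n; rewrite /Phi /ser_add -big_split.
by apply: eq_bigr => i _; rewrite psiS_add.
Qed.

Lemma Phi_cst u : Phi (ser_cst u) = psiS u.
Proof.
apply: functional_extensionality => n; rewrite /Phi big_ord_recl subn0 big1 ?addr0 //.
by move=> i _; rewrite /= psiS_zero.
Qed.

Lemma Phi_sh x : Phi (sh x) = sh (Phi x).
Proof.
by rewrite Phi_rec sh0 psiS_zero shift_sh add_sz.
Qed.

Lemma Phi_scal (c : k) x : Phi (ser_act (ps_cst c) x) = ser_act (ps_cst c) (Phi x).
Proof.
apply: functional_extensionality => n; rewrite ser_act_cst /Phi scaler_sumr.
by apply: eq_bigr => i _; rewrite ser_act_cst psiS_scale ser_act_cst.
Qed.

Lemma Phi_act s f : Phi (ser_act s f) = ser_act s (Phi f).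
Proof.
apply: functional_extensionality => n; elim: n s f => [|n IH] s f;
  rewrite (T7 hk hg s f) Phi_add Phi_scal Phi_sh (T7 hk hg s (Phi f)) /ser_add.
- by rewrite !sh0.
- by rewrite !shS IH.
Qed.

Lemma sh_add (x y : S) : sh (ser_add x y) = ser_add (sh x) (sh y).
Proof.
apply: functional_extensionality => n; rewrite /sh /ser_act /ser_add -big_split.
by apply: eq_bigr => i _; rewrite scalerDr.
Qed.

Lemma ser_addA (x y z : S) : ser_add x (ser_add y z) = ser_add (ser_add x y) z.
Proof. by apply: functional_extensionality => n; rewrite /ser_add addrA. Qed.

Lemma Phi_mul f f' : Phi (ser_mul f f') = ser_mul (Phi f) (Phi f').
Proof.
apply: functional_extensionality => n; elim: n f f' => [|n IH] f f'.
  by rewrite Phi0 !ser_mul0 !Phi0.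
set c := ser_cst (f 0%N); set s := shift f; set c' := ser_cst (f' 0%N); set s' := shift f'.
have eP : ser_mul f f' = ser_add (ser_cst (f 0%N * f' 0%N))
    (sh (ser_add (ser_mul c s') (ser_mul s f'))).
  have h1 := T1 hk hg c s f'; rewrite -(decomp f) in h1.
  have h2 := T2 hk hg c c' s'; rewrite -(decomp f') ser_mul_cst in h2.
  by rewrite h1 h2 sh_add ser_addA.
have eR : ser_mul (Phi f) (Phi f') = ser_add (ser_add (ser_mul (psiS (f 0%N)) (psiS (f' 0%N)))
    (sh (ser_mul (psiS (f 0%N)) (Phi s')))) (sh (ser_mul (Phi s) (Phi f'))).
  have h1 := T1 hk hg (psiS (f 0%N)) (Phi s) (Phi f'); rewrite -Phi_rec in h1.
  have h2 := T2 hk hg (psiS (f 0%N)) (psiS (f' 0%N)) (Phi s'); rewrite -Phi_rec in h2.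
  by rewrite h1 h2.
rewrite eR eP Phi_add Phi_cst Phi_sh Phi_add /ser_add !shS /ser_add IH IH Phi_cst psiS_mul.
by rewrite addrA.
Qed.

Definition g1 (f : S) : A := g (Phi f).

Lemma g1_iso : kh_alg_iso act g1.
Proof.
split.
- by apply: bij_comp; [case: hg|exact: Phi_bij].
- by move=> f f'; rewrite /g1 Phi_add (g_add hg).
- by move=> f f'; rewrite /g1 Phi_mul (g_mul hg).
- by rewrite /g1 Phi_cst psiS_one (g_one hg).
- by move=> s f; rewrite /g1 Phi_act (g_act hg).
Qed.

Lemma g1_cst u : g1 (ser_cst u) = g (psiS u).
Proof. by rewrite /g1 Phi_cst. Qed.

Lemma g1_H : g1 (ser_cst H) = HA.
Proof. by rewrite g1_cst psiS_H. Qed.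
Lemma g1_F : g1 (ser_cst F) = XmA.
Proof. by rewrite g1_cst psiS_F /Xp ginvK. Qed.

Lemma g1_close u : in_hA act (g1 (ser_cst u) - g (ser_cst u)).
Proof.
rewrite g1_cst (g_sub hg); apply/(inhA_g hg).
by rewrite /ser_add /sopp psiS0c /= subrr.
Qed.

Lemma g1_bar : bar_a_iso H F E act HA XmA XpA g1.
Proof.
case: hbar => _ hb2 _ _ hb5.
split.
- move=> u v; rewrite !g1_cst (g_sub hg) => /(inhA_g hg).
  by rewrite /ser_add /sopp !psiS0c => /eqP; rewrite subr_eq0 => /eqP.
- move=> a; have [u hu] := hb2 a; exists u.
  have -> : a - g1 (ser_cst u) = (a - g (ser_cst u)) - (g1 (ser_cst u) - g (ser_cst u)).
    by rewrite opprB addrA subrK.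
  by apply: (inhA_add hk) => //; apply: (inhA_opp hk); apply: g1_close.
- by rewrite g1_H subrr; apply: (inhA0 hk).
- by rewrite g1_F subrr; apply: (inhA0 hk).
- have -> : g1 (ser_cst E) - XpA = (g1 (ser_cst E) - g (ser_cst E)) + (g (ser_cst E) - XpA).
    by rewrite addrA subrK.
  by apply: (inhA_add hk) => //; apply: g1_close.
Qed.

End Main.

Section Uniq.
Variables (k : fieldType) (char0 : [pchar k] =i pred0) (U : algType k) (H F E : U).
Hypothesis hU : is_Usl2 H F E.
Variables (A : nzRingType) (act : (nat -> k) -> A -> A) (HA XmA : A).
Hypothesis hk : kh_algebra act.
Variables (g1 g2 : (nat -> U) -> A).
Hypothesis h1 : kh_alg_iso act g1.
Hypothesis h1H : g1 (ser_cst H) = HA.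
Hypothesis h1F : g1 (ser_cst F) = XmA.
Hypothesis h2 : kh_alg_iso act g2.
Hypothesis h2H : g2 (ser_cst H) = HA.
Hypothesis h2F : g2 (ser_cst F) = XmA.
Local Notation S := (nat -> U).

Lemma gc_alg_hom (G : S -> A) (hG : kh_alg_iso act G) : alg_hom (gc G : U -> Acp hk).
Proof.
split.
- exact: (gc_add hG).
- exact: (gc_mul hG).
- exact: (g_one hG).
- exact: (gc_scale hG).
Qed.

Lemma relE (G : S -> A) (hG : kh_alg_iso act G) : G (ser_cst H) = HA -> G (ser_cst F) = XmA ->
  br HA (gc G E) = gc G E *+ 2 /\ br (gc G E) XmA = HA.
Proof.
move=> eH eF; split.
- by rewrite -eH -/(gc G H) -(gc_br hG) (r1 hU) (gc_muln hG).
- by rewrite -eF -/(gc G F) -(gc_br hG) (r3 hU).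
Qed.

Lemma sameE : gc g2 E = gc g1 E.
Proof.
have [a1 b1] := relE h1 h1H h1F.
have [a2 b2] := relE h2 h2H h2F.
set D := gc g2 E - gc g1 E.
have eD1 : br HA D = D *+ 2 by rewrite /D brB a1 a2 mulrnBl.
have eD2 : br XmA D = 0 by rewrite br_anti /D brDl brNl b2 b1 subrr oppr0.
case: (h1) => -[gi1 gK1 Kg1] _ _ _ _.
have hd1 m : br H (gi1 D m) = gi1 D m *+ 2.
  apply: (br_coefE h1 (z := fun m => gi1 D m *+ 2)).
  by rewrite /gc h1H Kg1 eD1 -(g_muln h1) Kg1.
have hd2 m : br F (gi1 D m) = 0.
  apply: (br_coefE h1 (z := sz U)).
  by rewrite /gc h1F Kg1 eD2 (g_sz h1).
have d0 : gi1 D = sz U.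
  apply: functional_extensionality => m; exact: (lowest hU char0 (hd1 m) (hd2 m)).
apply/eqP; rewrite -subr_eq0 -/D -(Kg1 D) d0 (g_sz h1) //.
Qed.

Lemma same_cst u : g2 (ser_cst u) = g1 (ser_cst u).
Proof.
have [a1 b1] := relE h1 h1H h1F.
have rel : sl2_rel (HA : Acp hk) (XmA : Acp hk) (gc g1 E : Acp hk).
  split; first exact: a1.
  - change (br HA XmA = - (XmA *+ 2)); by rewrite -h1F -h1H -/(gc g1 H) -/(gc g1 F) -(gc_br h1) (r2 hU) (gc_opp h1) (gc_muln h1).
  - exact: b1.
have [f0 [_ _ _ _ u0]] := (proj2 hU) _ _ _ _ rel.
have e1 := u0 _ (gc_alg_hom h1) h1H h1F erefl.
have e2 := u0 _ (gc_alg_hom h2) h2H h2F sameE.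
by have := e2 u; rewrite -e1.
Qed.

Lemma same_all f : g2 f = g1 f.
Proof.
case: (h1) => -[gi1 gK1 Kg1] _ _ _ _.
suff e : forall n f, gi1 (g2 f) n = f n.
  by rewrite -{1}(Kg1 (g2 f)); congr g1; apply: functional_extensionality => n; apply: e.
have rec f0 : gi1 (g2 f0) = ser_add (ser_cst (f0 0%N)) (sh (gi1 (g2 (shift f0)))).
  apply: (g_inj h1); rewrite Kg1 (g_add h1) /sh (g_act h1) Kg1 -(same_cst (f0 0%N)).
  by rewrite -(g_act h2) -(g_add h2) -decomp.
elim=> [|n IH] f0; rewrite rec /ser_add.
- by rewrite sh0 addr0.
- by rewrite shS IH /= add0r.
Qed.

End Uniq.

Theorem mainTheorem12 (k : fieldType) (char0 : [pchar k] =i pred0)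
    (U : algType k) (HU XmU XpU : U) (HUsl2 : is_Usl2 HU XmU XpU)
    (A : nzRingType) (act : (nat -> k) -> A -> A) (HA XmA XpA : A)
    (Hdef : formal_deformation HU XmU XpU act HA XmA XpA)
    (Htriv : exists g : (nat -> U) -> A,
               h_trivializing HU XmU XpU act HA XmA XpA g) :
  exists g : (nat -> U) -> A,
    b_trivializing HU XmU XpU act HA XmA XpA g /\
    forall g' : (nat -> U) -> A,
      b_trivializing HU XmU XpU act HA XmA XpA g' -> forall f, g' f = g f.
Proof.
case: Hdef => hk _ arel _.
case: Htriv => g [hg hgH hbar].
exists (g1 char0 HUsl2 hk arel hg hgH hbar); split.
  split.
  - exact: g1_iso.
  - exact: g1_H.
  - exact: g1_F.
  - exact: g1_bar.
move=> g' [h' h'H h'F _] f.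
exact: (same_all char0 HUsl2 hk (g1_iso char0 HUsl2 hk arel hg hgH hbar)
  (g1_H char0 HUsl2 hk arel hg hgH hbar) (g1_F char0 HUsl2 hk arel hg hgH hbar) h' h'H h'F).
Qed.
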